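(* Let $I=(E,\mathcal C,c,p,\beta)$ be a BC instance, let $0<\varepsilon<\tfrac12$, and let $R\subseteq E$ be a strict representative set (SRS) of $I$ and $\varepsilon$. Then $R$ is a representative set of $I$ and $\varepsilon$.
   Context: Let $E$ be a finite ground set. A constraint on $E$ is either (i) a matching constraint: an undirected graph $\mathcal C=(V,E)$, whose feasible sets $\mathcal M=\mathcal M(\mathcal C)$ are the matchings of $\mathcal C$; or (ii) a matroid intersection constraint: a pair $\mathcal C=(\mathcal I_1,\mathcal I_2)$ where $(E,\mathcal I_1),(E,\mathcal I_2)$ are matroids given by independence oracles, with $\mathcal M(\mathcal C)=\mathcal I_1\cap\mathcal I_2$. A BC instance is $I=(E,\mathcal C,c,p,\beta)$ with $c,p:E\to\mathbb R_{\ge0}$, $\beta\in\mathbb R_{\ge 0}$; it is a BM instance if $\mathcal C$ is a matching constraint and a BI instance otherwise. A solution is $S\in\mathcal M(\mathcal C)$ with $c(S)\le\beta$ (with $f(S)=\sum_{e\in S}f(e)$); $\mathrm{OPT}(I)$ is the maximum of $p(S)$ over solutions. For $0<\varepsilon<\tfrac12$: $H=\{e\in E: p(e)>\varepsilon\,\mathrm{OPT}(I)\}$; $q(\varepsilon)=\lceil\varepsilon^{-1/\varepsilon}\rceil$; $\mathcal M_{\le q(\varepsilon)}=\{A\in\mathcal M(\mathcal C):|A|\le q(\varepsilon)\}$. A set $R\subseteq E$ is a representative set of $I$ and $\varepsilon$ if there is a solution $S$ of $I$ with $S\cap H\subseteq R$ and $p(S)\ge(1-4\varepsilon)\mathrm{OPT}(I)$.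 For $S\in\mathcal M_{\le q(\varepsilon)}$, a set $Z_S\subseteq E$ is a replacement of $S$ (for $I,\varepsilon$) if: (1) $(S\setminus H)\cup Z_S\in\mathcal M_{\le q(\varepsilon)}$; (2) $c(Z_S)\le c(S\cap H)$; (3) $p((S\setminus H)\cup Z_S)\ge(1-\varepsilon)p(S)$; (4) $|Z_S|\le|S\cap H|$. A set $R\subseteq E$ is a strict representative set (SRS) of $I$ and $\varepsilon$ if every $S\in\mathcal M_{\le q(\varepsilon)}$ has a replacement $Z_S\subseteq R$. *)

(* Defs.v *)
From HB Require Import structures.
From mathcomp Require Import all_boot all_order all_algebra.
From mathcomp Require Import reals exp.
Set Implicit Arguments. Unset Strict Implicit. Unset Printing Implicit Defensive.
Import Order.TTheory GRing.Theory Num.Theory.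
Local Open Scope ring_scope.

Definition is_matroid (E : finType) (I : pred {set E}) : Prop :=
  [/\ I set0,
      (forall A B : {set E}, B \subset A -> I A -> I B) &
      (forall A B : {set E}, I A -> I B -> (#|A| < #|B|)%N ->
          exists2 x, x \in B :\: A & I (x |: A))].

(* A constraint on E: either a (multi)graph whose edge set is E, each edge e
   having endpoints (ends e).1, (ends e).2 in V; or a pair of matroids on E. *)
Inductive constraint (E : finType) : Type :=
| MatchingC (V : finType) (ends : E -> V * V)
| MatIntC (I1 I2 : pred {set E}).

Definition valid_constraint (E : finType) (C : constraint E) : Prop :=
  match C with
  | MatchingC _ _ => True
  | MatIntC I1 I2 => is_matroid I1 /\ is_matroid I2
  end.

Definition share_vertex (E V : finType) (ends : E -> V * V) (e f : E) : bool :=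
  [|| (ends e).1 == (ends f).1, (ends e).1 == (ends f).2,
      (ends e).2 == (ends f).1 | (ends e).2 == (ends f).2].

Definition is_matching (E V : finType) (ends : E -> V * V) (S : {set E}) : bool :=
  [forall e in S, forall f in S, (e != f) ==> ~~ share_vertex ends e f].

Definition feasible (E : finType) (C : constraint E) (S : {set E}) : bool :=
  match C with
  | MatchingC _ ends => is_matching ends S
  | MatIntC I1 I2 => I1 S && I2 S
  end.

Section BC.
Variables (R : realType) (E : finType).

Definition sumf (f : E -> R) (S : {set E}) : R := \sum_(e in S) f e.

Definition is_solution (C : constraint E) (c : E -> R) (beta : R) (S : {set E}) : bool :=
  feasible C S && (sumf c S <= beta).

(* OPT(I): maximum profit of a solution (the empty set is always a solution
   and profits are nonnegative, so 0 as the neutral element is harmless). *)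
Definition OPT (C : constraint E) (c p : E -> R) (beta : R) : R :=
  \big[Num.max/0]_(S : {set E} | is_solution C c beta S) sumf p S.

Definition Hset (C : constraint E) (c p : E -> R) (beta eps : R) : {set E} :=
  [set e | p e > eps * OPT C c p beta].

Definition qeps (eps : R) : nat := `|Num.ceil (powR eps (- eps^-1))|%N.

Definition Mq (C : constraint E) (eps : R) (A : {set E}) : bool :=
  feasible C A && (#|A| <= qeps eps)%N.

Definition is_replacement (C : constraint E) (c p : E -> R) (beta eps : R)
    (S Z : {set E}) : Prop :=
  let H := Hset C c p beta eps in
  [/\ Mq C eps ((S :\: H) :|: Z),
      sumf c Z <= sumf c (S :&: H),
      sumf p ((S :\: H) :|: Z) >= (1 - eps) * sumf p S &
      (#|Z| <= #|S :&: H|)%N].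

Definition is_SRS (C : constraint E) (c p : E -> R) (beta eps : R) (Rs : {set E}) : Prop :=
  forall S : {set E}, Mq C eps S ->
    exists Z : {set E}, Z \subset Rs /\ is_replacement C c p beta eps S Z.

Definition is_representative (C : constraint E) (c p : E -> R) (beta eps : R)
    (Rs : {set E}) : Prop :=
  exists S : {set E},
    [/\ is_solution C c beta S,
        S :&: Hset C c p beta eps \subset Rs &
        sumf p S >= (1 - 4 * eps) * OPT C c p beta].
End BC.

(* Main.v *)
Require Import Defs.
From HB Require Import structures.
From mathcomp Require Import all_boot all_order all_algebra.
From mathcomp Require Import reals exp.
From mathcomp Require Import zify ring lra.
Import Order.TTheory GRing.Theory Num.Theory.
Set Implicit Arguments. Unset Strict Implicit.

Lemma matroid_ext (E : finType) (I : pred {set E}) A B :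
  is_matroid I -> I A -> I B ->
  exists J, [/\ I J, A \subset J, J \subset A :|: B & #|B| <= #|J|].
Proof.
move=> [I0 Isub Iaug] IA IB.
suff: forall k, exists J, [/\ I J, A \subset J, J \subset A :|: B & minn #|B| (#|A| + k) <= #|J|].
  move/(_ #|B|) => [J [IJ AJ JAB le]]; exists J; split => //.
  by apply: leq_trans le; rewrite leq_min leqnn leq_addl.
elim=> [|k [J [IJ AJ JAB le]]].
  by exists A; split => //; [exact: subsetUl | rewrite addn0 geq_minr].
case: (ltnP #|J| #|B|) => hJ.
  have [x xBJ Ix] := Iaug _ _ IJ IB hJ.
  exists (x |: J); split => //.
  - by apply: subset_trans AJ (subsetUr _ _).
  - rewrite subUset sub1set JAB andbT; move: xBJ; rewrite !inE => /andP[_ ->].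
    by rewrite orbT.
  - rewrite cardsU1; move: xBJ; rewrite !inE => /andP[/negbTE -> _] /=.
    rewrite add1n.
    lia.
exists J; split => //; apply: leq_trans (geq_minl _ _) hJ.
Qed.

Lemma matroid_drop (E : finType) (I : pred {set E}) A S :
  is_matroid I -> I A -> I S ->
  exists J, [/\ I J, A :|: (S :\: (S :\: A :\: J)) \subset J &
                #|S :\: A :\: J| <= #|A :\: S|].
Proof.
move=> M IA IS; have [J [IJ AJ JAB le]] := @matroid_ext _ _ _ _ M IA IS.
exists J; split => //.
  apply/subsetP => x; rewrite !inE => /orP[xA|/andP[xnot xS]].
    exact: (subsetP AJ).
  case: (boolP (x \in A)) => xA; first exact: (subsetP AJ).
  by move: xnot; rewrite xS xA /= andbT negbK.
have e1 := cardsID A S.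
have e2 := cardsID J (S :\: A).
have e3 := cardsID A J.
have e4 := cardsID S A.
have h5 : J :\: A = (S :\: A) :&: J.
  apply/setP => x; rewrite !inE.
  case xA: (x \in A); case xJ: (x \in J); rewrite /= ?andbT ?andbF //.
  all: try by have := subsetP AJ x; rewrite xA xJ => /(_ isT).
  all: try by have := subsetP JAB x; rewrite inE xA xJ /= => /(_ isT) ->.

rewrite (setIC A S) in e4.
rewrite h5 in e3; rewrite (setIidPr AJ) in e3.
lia.
Qed.

Lemma matching_le1 (E V : finType) (ends : E -> V * V) S (v : V) :
  is_matching ends S ->
  #|[set s in S | (v == (ends s).1) || (v == (ends s).2)]| <= 1.
Proof.
move=> M; apply/card_le1_eqP => s t; rewrite !inE => /andP[sS hs] /andP[tS ht].
apply/eqP; apply/negPn/negP; rewrite eq_sym => neq.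
move: M => /forall_inP/(_ s sS)/forall_inP/(_ t tS)/implyP/(_ neq).
rewrite /share_vertex.
by case/orP: hs => /eqP <-; case/orP: ht => /eqP <-; rewrite eqxx ?orbT.
Qed.

Lemma card_bigcup_le (E : finType) (Z : {set E}) (N : E -> {set E}) k :
  (forall z, #|N z| <= k) -> #|\bigcup_(z in Z) N z| <= k * #|Z|.
Proof.
move=> hN.
have : #|\bigcup_(z in Z) N z| <= \sum_(z in Z) #|N z|.
  apply: (big_ind2 (fun (X : {set E}) n => #|X| <= n)).
  - by rewrite cards0.
  - move=> X1 n1 X2 n2 h1 h2; apply: leq_trans (leq_card_setU _ _) _.
    exact: leq_add.
  - by move=> z _.
move=> h; apply: leq_trans h _.
rewrite mulnC -sum_nat_const; exact: leq_sum.
Qed.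

Lemma share_sym (E V : finType) (ends : E -> V * V) e f :
  share_vertex ends e f = share_vertex ends f e.
Proof.
by apply/idP/idP; rewrite /share_vertex => /or4P [] /eqP ->; rewrite eqxx ?orbT.
Qed.

Lemma feas_sub (E : finType) (C : constraint E) (A B : {set E}) :
  valid_constraint C -> B \subset A -> feasible C A -> feasible C B.
Proof.
case: C => [V ends|I1 I2] /=.
  move=> _ BA /forall_inP M; apply/forall_inP => e eB; apply/forall_inP => f fB.
  by move: (M e (subsetP BA e eB)) => /forall_inP/(_ f (subsetP BA f fB)).
move=> [[_ s1 _] [_ s2 _]] BA /andP[h1 h2]; apply/andP; split.
  exact: s1 h1. exact: s2 h2.
Qed.

Lemma feas0 (E : finType) (C : constraint E) : valid_constraint C -> feasible C set0.
Proof.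
case: C => [V ends|I1 I2] /=.
  by move=> _; apply/forall_inP => e; rewrite inE.
by move=> [[h1 _ _] [h2 _ _]]; rewrite h1 h2.
Qed.

Lemma feas_merge (E : finType) (C : constraint E) (A S : {set E}) :
  valid_constraint C -> feasible C A -> feasible C S ->
  exists D : {set E}, [/\ D \subset S, #|D| <= 2 * #|A :\: S| & feasible C (A :|: (S :\: D))].
Proof.
case: C => [V ends|I1 I2] /=.
  move=> _ MA MS.
  pose N z := [set s in S | share_vertex ends z s].
  exists (\bigcup_(z in A :\: S) N z); split.
  - by apply/bigcupsP => z _; apply/subsetP => s; rewrite inE => /andP[].
  - apply: card_bigcup_le => z.
    set N1 := [set s in S | ((ends z).1 == (ends s).1) || ((ends z).1 == (ends s).2)].
    set N2 := [set s in S | ((ends z).2 == (ends s).1) || ((ends z).2 == (ends s).2)].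
    apply: (@leq_trans #|N1 :|: N2|).
      apply: subset_leq_card; apply/subsetP => s; rewrite !inE /share_vertex.
      by case/andP => -> /or4P [] ->; rewrite ?orbT.
    apply: leq_trans (leq_card_setU _ _) _.
    by rewrite -[2]/(1 + 1); apply: leq_add; apply: matching_le1.
  have key : forall e f, e \in A -> f \in S :\: \bigcup_(z in A :\: S) N z ->
      e != f -> ~~ share_vertex ends e f.
    move=> e f eA; rewrite inE => /andP[fnD fS] nef.
    case: (boolP (e \in S)) => eS.
      by move: MS => /forall_inP/(_ e eS)/forall_inP/(_ f fS)/implyP/(_ nef).
    apply/negP => sh; apply: (negP fnD).
    apply/bigcupP; exists e; first by rewrite inE eS eA.
    by rewrite inE fS sh.
  apply/forall_inP => e; rewrite inE => /orP[eA|eS]; apply/forall_inP => f;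
    rewrite inE => /orP[fA|fS]; apply/implyP => nef.
  - by move: MA => /forall_inP/(_ e eA)/forall_inP/(_ f fA)/implyP/(_ nef).
  - exact: key.
  - by rewrite share_sym; apply: key => //; rewrite eq_sym.
  - move: eS fS; rewrite !inE => /andP[_ eS] /andP[_ fS].
    by move: MS => /forall_inP/(_ e eS)/forall_inP/(_ f fS)/implyP/(_ nef).
move=> [M1 M2] /andP[IA1 IA2] /andP[IS1 IS2].
have [J1 [IJ1 sub1 le1]] := @matroid_drop _ _ _ _ M1 IA1 IS1.
have [J2 [IJ2 sub2 le2]] := @matroid_drop _ _ _ _ M2 IA2 IS2.
exists ((S :\: A :\: J1) :|: (S :\: A :\: J2)); split.
- by rewrite subUset; apply/andP; split; apply/subsetP => x; rewrite !inE => /and3P[].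
- apply: leq_trans (leq_card_setU _ _) _; rewrite mul2n -addnn; exact: leq_add.
case: M1 => _ s1 _; case: M2 => _ s2 _.
apply/andP; split.
  apply: s1 IJ1; apply: subset_trans sub1; apply: setUS; apply: setDS; exact: subsetUl.
apply: s2 IJ2; apply: subset_trans sub2; apply: setUS; apply: setDS; exact: subsetUr.
Qed.
Local Open Scope ring_scope.
Lemma nat_le_qeps (R : realType) (eps : R) (n : nat) :
  0 < eps -> eps < 1 / 2 -> n%:R <= eps ^- 2 -> (n <= qeps eps)%N.
Proof.
move=> e0 e1 hn.
have hp : eps ^- 2 <= powR eps (- eps^-1).
  rewrite -powR_invn; last exact: ltW.
  apply: ger_powR; first by rewrite e0 /=; lra.
  rewrite lerN2.
  have : 2 < eps^-1.
    rewrite -div1r ltr_pdivlMr //; lra.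
  move=> h; apply: ltW; exact: h.
have hc := ceil_ge (powR eps (- eps^-1)).
have : (n%:Z)%:~R <= (Num.ceil (powR eps (- eps^-1)))%:~R :> R.
  rewrite -[X in X <= _]/(n%:R); lra.
rewrite ler_int /qeps => h; lia.
Qed.

Section Sums.
Variables (R : realType) (E : finType).
Implicit Types (f : E -> R) (A B : {set E}).

Lemma sumf_split f A B : sumf f A = sumf f (A :&: B) + sumf f (A :\: B).
Proof. exact: big_setID. Qed.

Lemma sumf_ge0 f A : (forall e, 0 <= f e) -> 0 <= sumf f A.
Proof. by move=> h; apply: sumr_ge0 => e _. Qed.

Lemma sumf_sub f A B : (forall e, 0 <= f e) -> A \subset B -> sumf f A <= sumf f B.
Proof.
move=> h AB; rewrite (sumf_split f B A) (setIidPr AB).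
have := sumf_ge0 (B :\: A) h; lra.
Qed.

Lemma sumf_U f A B : (forall e, 0 <= f e) -> sumf f (A :|: B) <= sumf f A + sumf f B.
Proof.
move=> h; rewrite (sumf_split f (A :|: B) A).
have -> : (A :|: B) :&: A = A by apply/setIidPr; exact: subsetUl.
have : sumf f ((A :|: B) :\: A) <= sumf f B.
  apply: sumf_sub => //; apply/subsetP => x; rewrite !inE => /andP[/negbTE -> //].
lra.
Qed.

Lemma sumf_le_card f A d : (forall e, e \in A -> f e <= d) -> sumf f A <= #|A|%:R * d.
Proof.
move=> h; rewrite /sumf.
apply: (@le_trans _ _ (\sum_(e in A) d)).
  by apply: ler_sum => e eA; apply: h.
by rewrite sumr_const mulr_natl.
Qed.

Lemma sumf_ge_card f A d : (forall e, e \in A -> d <= f e) -> #|A|%:R * d <= sumf f A.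
Proof.
move=> h; rewrite /sumf.
apply: (@le_trans _ _ (\sum_(e in A) d)); first by rewrite sumr_const mulr_natl.
by apply: ler_sum => e eA; apply: h.
Qed.

Lemma opt_ge (C : constraint E) (c p : E -> R) (beta : R) S :
  (forall e, 0 <= p e) -> is_solution C c beta S -> sumf p S <= OPT C c p beta.
Proof.
move=> hp sol; rewrite /OPT (bigD1 S) //=.
by rewrite le_max lexx.
Qed.

Lemma opt_att (C : constraint E) (c p : E -> R) (beta : R) :
  valid_constraint C -> 0 <= beta -> (forall e, 0 <= p e) ->
  exists S, is_solution C c beta S /\ sumf p S = OPT C c p beta.
Proof.
move=> vC b0 hp.
have : OPT C c p beta = 0 \/ exists S, is_solution C c beta S /\ sumf p S = OPT C c p beta.
  rewrite /OPT; apply: (big_ind (fun x => x = 0 \/ exists S, is_solution C c beta S /\ sumf p S = x)).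
  - by left.
  - move=> x y hx hy; rewrite /Num.max; case: ifP => _; by [].
  - by move=> S sol; right; exists S.
case=> [h0|//]; exists set0; split.
  by rewrite /is_solution feas0 //= /sumf big_set0.
by rewrite h0 /sumf big_set0.
Qed.
End Sums.

Unset Implicit Arguments. Set Strict Implicit.

Theorem mainTheorem3 (R : realType) (E : finType) (C : constraint E)
    (c p : E -> R) (beta eps : R) (Rs : {set E}) :
  valid_constraint C ->
  (forall e, 0 <= c e) -> (forall e, 0 <= p e) -> 0 <= beta ->
  0 < eps -> eps < 1 / 2 ->
  is_SRS C c p beta eps Rs ->
  is_representative C c p beta eps Rs.
Proof.
move=> vC c0 p0 b0 e0 e1 srs.
have [S [solS pS]] := opt_att c vC b0 p0.
set O := OPT C c p beta in pS.
have O0 : 0 <= O by rewrite -pS; exact: sumf_ge0.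
have [Oeq|Opos] := eqVneq O 0.
  exists set0; split.
  - by rewrite /is_solution feas0 //= /sumf big_set0.
  - by rewrite set0I sub0set.
  - by rewrite /sumf big_set0 -/O Oeq mulr0.
have Ogt : 0 < O by rewrite lt0r Opos.
set H := Hset C c p beta eps.
move: solS => /andP[feasS cS].
pose T := [set e in S | eps ^+ 2 * O < p e].
have TS : T \subset S by apply/subsetP => x; rewrite inE => /andP[].
have SHT : S :&: H \subset T.
  apply/subsetP => x; rewrite !inE => /andP[xS xH]; rewrite xS /=.
  apply: le_lt_trans xH; rewrite -/O expr2 -mulrA ler_piMl //; first exact: mulr_ge0 (ltW e0) O0.
  lra.
have feasT : feasible C T := feas_sub vC TS feasS.
have cardT : (#|T| <= qeps eps)%N.
  apply: nat_le_qeps => //.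
  have h1 : #|T|%:R * (eps ^+ 2 * O) <= O.
    apply: le_trans (_ : sumf p T <= _).
      by apply: sumf_ge_card => e; rewrite inE => /andP[_ /ltW].
    by rewrite -pS; apply: sumf_sub.
  have e2 : 0 < eps ^+ 2 by apply: exprn_gt0.
  rewrite -[eps ^- 2]div1r ler_pdivlMr //.
  rewrite mulrA in h1; rewrite -(ler_pM2r Ogt) mul1r //.
have [Z [ZR [rep1 rep2 rep3 rep4]]] : exists Z : {set E}, Z \subset Rs /\ is_replacement C c p beta eps T Z.
  by apply: srs; rewrite /Mq feasT cardT.
have THeq : T :&: H = S :&: H.
  apply/setP => x; rewrite !in_setI; apply/idP/idP => /andP[xT xH]; rewrite xH andbT.
    exact: (subsetP TS x xT).
  by apply: (subsetP SHT); rewrite in_setI xT xH.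
rewrite -/H in rep1 rep2 rep3 rep4.
rewrite THeq in rep2 rep4.
set A := (T :\: H) :|: Z in rep1 rep3.
have feasA : feasible C A by move: rep1 => /andP[].
have [D [DS cardD feasAD]] := feas_merge vC feasA feasS.
have ASZ : A :\: S \subset Z.
  apply/subsetP => x; rewrite in_setD in_setU in_setD => /andP[xS /orP[/andP[_ xT]|//]].
  by rewrite (subsetP TS x xT) in xS.
pose W := A :|: ((S :\: T) :\: D).
have WAD : W \subset A :|: (S :\: D).
  by apply: setUS; apply/subsetP => x; rewrite !inE => /andP[-> /andP[_ ->]].
have feasW : feasible C W := feas_sub vC WAD feasAD.
exists W; split.
- rewrite /is_solution feasW /=.
  have u1 := sumf_U (A) ((S :\: T) :\: D) c0.
  have u2 := sumf_U (T :\: H) Z c0.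
  have u3 : sumf c ((S :\: T) :\: D) <= sumf c (S :\: T).
    by apply: sumf_sub => //; apply/subsetP => x; rewrite inE => /andP[].
  have s1 := sumf_split c T H.
  have s2 := sumf_split c S T.
  rewrite (setIidPr TS) in s2.
  rewrite THeq in s1.
  rewrite -/W in u1; lra.
- apply/subsetP => x; rewrite in_setI in_setU => /andP[/orP[xA|xST] xH].
    move: xA; rewrite in_setU in_setD xH /= => xZ; exact: (subsetP ZR).
  move: xST; rewrite !in_setD => /andP[_ /andP[xT xS]].
  by move: (subsetP SHT x); rewrite in_setI xS xH (negbTE xT) => /(_ isT).
- rewrite -/O.
  have sW := sumf_split p W A.
  rewrite (setIidPr (subsetUl A ((S :\: T) :\: D))) in sW.
  have sST := sumf_split p (S :\: T) (D :|: Z).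
  have l1 : sumf p ((S :\: T) :\: (D :|: Z)) <= sumf p (W :\: A).
    apply: sumf_sub => //; apply/subsetP => x.
    rewrite !in_setD in_setU => /andP[/norP[xD xZ] /andP[xT xS]].
    by rewrite !in_setU !in_setD (negbTE xT) (negbTE xZ) xD xS !andbF.
  have h_card : (#|(S :\: T) :&: (D :|: Z)| <= 3 * #|S :&: H|)%N.
    apply: leq_trans (_ : #|D :|: Z| <= _)%N; first by apply: subset_leq_card; exact: subsetIr.
    apply: leq_trans (leq_card_setU _ _) _.
    have : (#|A :\: S| <= #|Z|)%N by apply: subset_leq_card.
    move: cardD rep4; clear; lia.
  have l2 : sumf p ((S :\: T) :&: (D :|: Z)) <= (#|(S :\: T) :&: (D :|: Z)|)%:R * (eps ^+ 2 * O).
    apply: sumf_le_card => e; rewrite in_setI in_setD => /andP[/andP[eT eS] _].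
    by move: eT; rewrite inE eS /= -leNgt.
  have l3 : (#|(S :\: T) :&: (D :|: Z)|)%:R * (eps ^+ 2 * O) <= (3 * #|S :&: H|)%:R * (eps ^+ 2 * O).
    apply: ler_wpM2r; first by apply: mulr_ge0 => //; apply: exprn_ge0; apply: ltW.
    by rewrite ler_nat.
  have l4 : #|S :&: H|%:R * (eps * O) <= O.
    apply: le_trans (_ : sumf p (S :&: H) <= _).
      by apply: sumf_ge_card => e; rewrite !inE => /andP[_ /ltW].
    by rewrite -pS; apply: sumf_sub => //; exact: subsetIl.
  have l5 : (3 * #|S :&: H|)%:R * (eps ^+ 2 * O) = 3 * eps * (#|S :&: H|%:R * (eps * O)).
    by rewrite natrM expr2; ring.
  have l6 : 3 * eps * (#|S :&: H|%:R * (eps * O)) <= 3 * eps * O.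
    by apply: ler_wpM2l => //; lra.
  have s3 := sumf_split p S T.
  rewrite (setIidPr TS) in s3.
  have g0 : 0 <= eps * sumf p (S :\: T) by apply: mulr_ge0; [lra | exact: sumf_ge0].
  rewrite pS in s3.
  have s4 : eps * sumf p T + eps * sumf p (S :\: T) = eps * O by rewrite -mulrDr s3.
  clear -sW l1 sST l2 l3 l5 l6 rep3 s3 g0 s4.
  lra.
Qed.
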